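(* For every $m\in\mathbb{N}$, the matrix $C_m=\frac12\mathrm{I}_m+\mathrm{U}_m$ is congruent to $\Gamma_2\oplus\mathrm{H}_2(-1)^{\oplus (m-2)/2}$ if $m$ is even, and to $1\oplus\mathrm{H}_2(-1)^{\oplus(m-1)/2}$ if $m$ is odd.
   Context: $\mathrm{I}_m$ is the identity and $\mathrm{U}_m\in\mathbb{R}^{m\times m}$ the strictly upper triangular matrix with all entries above the diagonal equal to $1$ ($C_m$ is the level-2 signature of the canonical axis path in $\mathbb{R}^m$). $\Gamma_2=\begin{bmatrix}0&-1\\1&1\end{bmatrix}$, $\mathrm{H}_2(-1)=\begin{bmatrix}0&1\\-1&0\end{bmatrix}$. $M\oplus W$ denotes the block diagonal matrix, $M^{\oplus n}$ the $n$-fold block diagonal sum. $M,V\in\mathbb{R}^{m\times m}$ are congruent if $PMP^\top=V$ for some invertible real $P$. *)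

(* Defs.v *)
From HB Require Import structures.
From mathcomp Require Import all_boot all_order all_algebra.
From mathcomp Require Import reals.
Set Implicit Arguments. Unset Strict Implicit. Unset Printing Implicit Defensive.
Import Order.TTheory GRing.Theory Num.Theory.
Local Open Scope ring_scope.

Section Defs.
Variable R : realType.

Definition Um (m : nat) : 'M[R]_m := \matrix_(i < m, j < m) ((i < j)%N)%:R.

Definition Cm (m : nat) : 'M[R]_m := 2^-1 *: 1%:M + Um m.

Definition Gamma2 : 'M[R]_2 :=
  \matrix_(i < 2, j < 2)
    (if (i == 0 :> nat) then (if (j == 0 :> nat) then 0 else -1)
     else 1).

Definition H2m1 : 'M[R]_2 :=
  \matrix_(i < 2, j < 2)
    (if (i == 0 :> nat) then (if (j == 0 :> nat) then 0 else 1)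
     else (if (j == 0 :> nat) then -1 else 0)).

Definition dsum (m n : nat) (M : 'M[R]_m) (W : 'M[R]_n) : 'M[R]_(m + n) :=
  block_mx M 0 0 W.

Fixpoint Hsum (k : nat) : 'M[R]_(k.*2) :=
  match k return 'M[R]_(k.*2) with
  | 0 => 0
  | k'.+1 => dsum H2m1 (Hsum k')
  end.

Definition congruent (n : nat) (M V : 'M[R]_n) : Prop :=
  exists P : 'M[R]_n, P \in unitmx /\ P *m M *m P^T = V.

End Defs.

(* Main.v *)
Require Import Defs.
From HB Require Import structures.
From mathcomp Require Import all_boot all_order all_algebra.
From mathcomp Require Import reals.
From mathcomp Require Import zify ring lra.
Import Order.TTheory GRing.Theory Num.Theory.
Local Open Scope ring_scope.

Section Aux.
Variable R : realType.

Definition mxf (n : nat) (f : nat -> nat -> R) : 'M[R]_n := \matrix_(i < n, j < n) f i j.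

Lemma sum_delta n (F : nat -> R) p :
  \sum_(k < n) ((nat_of_ord k == p)%:R * F k) = (p < n)%:R * F p.
Proof.
elim: n => [|n IH]; first by rewrite big_ord0 mul0r.
rewrite big_ord_recr /= IH.
have -> : (p < n.+1)%N = (p < n)%N || (n == p) by lia.
case: (eqVneq n p) => [<-|H]; first by rewrite ltnn /= !mul1r mul0r add0r.
by rewrite orbF mul0r addr0.
Qed.

Definition sqf (a : nat -> R) (p1 : nat -> nat) (b : nat -> R) (p2 : nat -> nat) :=
  fun i k : nat => a i * (k == p1 i)%:R + b i * (k == p2 i)%:R.

Lemma sum_sq n a p1 b p2 i (F : nat -> R) :
  \sum_(k < n) (sqf a p1 b p2 i k * F k) =
  a i * (p1 i < n)%:R * F (p1 i) + b i * (p2 i < n)%:R * F (p2 i).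
Proof.
under eq_bigr => k _ do rewrite /sqf mulrDl -!mulrA [a i * _]mulrCA [b i * _]mulrCA.
rewrite big_split /= (sum_delta _ (fun k => a i * F k)) (sum_delta _ (fun k => b i * F k)).
ring.
Qed.

Lemma mulQ n a p1 b p2 f i j :
  (mxf n (sqf a p1 b p2) *m mxf n f) i j =
  a i * (p1 i < n)%:R * f (p1 i) j + b i * (p2 i < n)%:R * f (p2 i) j.
Proof.
rewrite mxE.
under eq_bigr => k _ do rewrite !mxE.
by rewrite (sum_sq n a p1 b p2 i (fun k => f k j)).
Qed.

Lemma congQ n a p1 b p2 f i j :
  (mxf n (sqf a p1 b p2) *m mxf n f *m (mxf n (sqf a p1 b p2))^T) i j =
  a j * (p1 j < n)%:R * (a i * (p1 i < n)%:R * f (p1 i) (p1 j) + b i * (p2 i < n)%:R * f (p2 i) (p1 j))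
  + b j * (p2 j < n)%:R * (a i * (p1 i < n)%:R * f (p1 i) (p2 j) + b i * (p2 i < n)%:R * f (p2 i) (p2 j)).
Proof.
rewrite mxE.
under eq_bigr => k _ do rewrite mulQ mxE [mxf _ _ _ _]mxE mulrC.
by rewrite (sum_sq n a p1 b p2 j (fun k => a i * (p1 i < n)%:R * f (p1 i) k + b i * (p2 i < n)%:R * f (p2 i) k)).
Qed.

Lemma id_mxf n : (1%:M : 'M[R]_n) = mxf n (fun i j => (i == j)%:R).
Proof. by apply/matrixP => i j; rewrite !mxE. Qed.

Lemma cong_trans n (A B C : 'M[R]_n) : congruent A B -> congruent B C -> congruent A C.
Proof.
move=> [P [HP <-]] [Q [HQ <-]]; exists (Q *m P); split; first by rewrite unitmx_mul HP HQ.
by rewrite trmx_mul !mulmxA.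
Qed.

Lemma cong_eq n (A B : 'M[R]_n) : A = B -> congruent A B.
Proof. by move=> ->; exists 1%:M; rewrite unitmx1 trmx1 mul1mx mulmx1. Qed.

Lemma cong_lift p n (X : 'M[R]_p) (A B : 'M[R]_n) :
  congruent A B -> congruent (dsum X A) (dsum X B).
Proof.
move=> [P [HP HB]]. rewrite /congruent. exists (block_mx 1%:M 0 0 P); split.
  by rewrite unitmxE det_ublock det1 mul1r -unitmxE.
rewrite -HB /dsum tr_block_mx !mulmx_block trmx1 !trmx0.
by rewrite ?mulmx0 ?mul0mx ?mulmx1 ?mul1mx ?addr0 ?add0r ?mul0mx.
Qed.

Lemma cong_sq n f g a p1 b p2 Q' :
  mxf n (sqf a p1 b p2) *m Q' = 1%:M ->
  (forall i j : nat, (i < n)%N -> (j < n)%N ->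
   a j * (p1 j < n)%:R * (a i * (p1 i < n)%:R * f (p1 i) (p1 j) + b i * (p2 i < n)%:R * f (p2 i) (p1 j))
  + b j * (p2 j < n)%:R * (a i * (p1 i < n)%:R * f (p1 i) (p2 j) + b i * (p2 i < n)%:R * f (p2 i) (p2 j))
   = g i j) ->
  congruent (mxf n f) (mxf n g).
Proof.
move=> HU H; exists (mxf n (sqf a p1 b p2)); split; first by case: (mulmx1_unit HU).
apply/matrixP => i j; rewrite congQ H // mxE //.
Qed.

Lemma dsumE p q f g :
  dsum (mxf p f) (mxf q g) =
  mxf (p + q) (fun i j => if (i < p)%N then (if (j < p)%N then f i j else 0)
                         else (if (j < p)%N then 0 else g (i - p)%N (j - p)%N)).
Proof.
apply/matrixP => i j; rewrite /dsum /block_mx /col_mx /row_mx /mxf !mxE.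
case: splitP => i' Hi; rewrite !mxE; case: splitP => j' Hj; rewrite !mxE //.
- by rewrite Hi Hj.
- by rewrite Hi Hj !addKn.
Qed.


Ltac notif c := lazymatch c with
  | context[if _ then _ else _] => fail
  | true => fail | false => fail | _ => idtac end.

Ltac dec1 :=
  match goal with
  | |- context[if ?c then _ else _] => notif c; case: (boolP c) => ?
  | |- context[(?x == ?y :> nat)] => notif (x == y :> nat); case: (boolP (x == y :> nat)) => ?
  | |- context[(?x <= ?y)%N] => notif (x <= y)%N; case: (boolP (x <= y)%N) => ?
  end.

Ltac crush := repeat (dec1; try (exfalso; lia)); rewrite /=; try ring.

Definition wf m (i j : nat) : R :=
  (j == i.+1)%:R - (i == j.+1)%:R + ((i.+1 == m) && (j.+1 == m))%:R.
Definition hf (i j : nat) : R := ((i == 0) && (j == 1))%:R - ((i == 1) && (j == 0))%:R.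
Definition dsf p (f g : nat -> nat -> R) (i j : nat) : R :=
  if (i < p)%N then (if (j < p)%N then f i j else 0)
  else (if (j < p)%N then 0 else g (i - p)%N (j - p)%N).


Lemma peel m : (1 <= m)%N ->
  congruent (mxf m.+2 (wf m.+2)) (mxf m.+2 (dsf 2 hf (wf m))).
Proof.
move=> Hm.
eapply (@cong_sq _ _ _ (fun _ => 1) id (fun i : nat => (i == 2)%:R) (fun _ => 0%N)
   (mxf m.+2 (sqf (fun _ => 1) id (fun i : nat => -(i == 2)%:R) (fun _ => 0%N)))).
  rewrite id_mxf; apply/matrixP => i j; rewrite mulQ mxE.
  have := ltn_ord i; have := ltn_ord j.
  move: (nat_of_ord i) (nat_of_ord j) => x y Hy Hx.
  rewrite /sqf /=. crush.
move=> i j Hi Hj; rewrite /wf /dsf /hf /=. crush.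
Qed.


Definition gf (i j : nat) : R :=
  - ((i == 0) && (j == 1))%:R + ((i == 1) && (j == 0))%:R + ((i == 1) && (j == 1))%:R.
Definition hsf (i j : nat) : R :=
  (((i %% 2)%N == 0) && (j == i.+1))%:R - (((i %% 2)%N == 1) && (i == j.+1))%:R.

Lemma Gamma2E : Gamma2 R = mxf 2 gf.
Proof.
apply/matrixP => i j; rewrite !mxE /gf.
case: i => [[|[|//]] Hi]; case: j => [[|[|//]] Hj] /=; ring.
Qed.

Lemma H2E : H2m1 R = mxf 2 hf.
Proof.
apply/matrixP => i j; rewrite !mxE /hf.
case: i => [[|[|//]] Hi]; case: j => [[|[|//]] Hj] /=; ring.
Qed.

Lemma oneE : (1%:M : 'M[R]_1) = mxf 1 (fun _ _ => 1).
Proof. by apply/matrixP => i j; rewrite !mxE !ord1. Qed.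

Lemma HsumE k : Hsum R k = mxf (k.*2) hsf.
Proof.
elim: k => [|k IH]; first by apply/matrixP => [[]].
rewrite /= IH H2E dsumE; apply/matrixP => i j; rewrite !mxE.
have := ltn_ord i; have := ltn_ord j.
move: (nat_of_ord i) (nat_of_ord j) => x y Hy Hx.
rewrite /dsf /hf /hsf. crush.
Qed.

Lemma swap2 n : congruent (mxf n.+4 (dsf 2 hf (dsf 2 gf hsf))) (mxf n.+4 (dsf 2 gf hsf)).
Proof.
pose sg := fun i : nat => if (i < 2)%N then (i + 2)%N else if (i < 4)%N then (i - 2)%N else i.
eapply (@cong_sq _ _ _ (fun _ => 1) sg (fun _ => 0) id
   (mxf n.+4 (sqf (fun _ => 1) sg (fun _ => 0) id))).
  rewrite id_mxf; apply/matrixP => i j; rewrite mulQ mxE.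
  have := ltn_ord i; have := ltn_ord j.
  move: (nat_of_ord i) (nat_of_ord j) => x y Hy Hx.
  rewrite /sqf /sg /=. crush.
move=> i j Hi Hj; rewrite /sg /dsf /hf /gf /hsf /=. crush.
Qed.

Lemma swap1 n : congruent (mxf n.+3 (dsf 2 hf (dsf 1 (fun _ _ => 1) hsf)))
                          (mxf n.+3 (dsf 1 (fun _ _ => 1) hsf)).
Proof.
pose sg := fun i : nat => if (i < 1)%N then (i + 2)%N else if (i < 3)%N then (i - 1)%N else i.
pose tg := fun i : nat => if (i < 2)%N then (i + 1)%N else if (i < 3)%N then (i - 2)%N else i.
eapply (@cong_sq _ _ _ (fun _ => 1) sg (fun _ => 0) id
   (mxf n.+3 (sqf (fun _ => 1) tg (fun _ => 0) id))).
  rewrite id_mxf; apply/matrixP => i j; rewrite mulQ mxE.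
  have := ltn_ord i; have := ltn_ord j.
  move: (nat_of_ord i) (nat_of_ord j) => x y Hy Hx.
  rewrite /sqf /sg /tg /=. crush.
move=> i j Hi Hj; rewrite /sg /dsf /hf /hsf /=. crush.
Qed.


Lemma Cm_mxf m : Cm R m = mxf m (fun i j => 2^-1 * (i == j)%:R + (i < j)%:R).
Proof. by apply/matrixP => i j; rewrite !mxE. Qed.

Lemma C_W m : congruent (Cm R m) (mxf m (wf m)).
Proof.
set D0 := mxf m (sqf (fun _ => 1) id (fun _ => -1) S).
have HU : D0 *m mxf m (fun i j => (i <= j)%:R) = 1%:M.
  rewrite id_mxf; apply/matrixP => i j; rewrite mulQ mxE.
  have := ltn_ord i; have := ltn_ord j.
  move: (nat_of_ord i) (nat_of_ord j) => x y Hy Hx.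
  rewrite /sqf /=. crush.
have E : D0 *m Cm R m *m D0^T = mxf m (fun i j => 2^-1 * wf m i j).
  rewrite Cm_mxf; apply/matrixP => i j; rewrite congQ mxE.
  have := ltn_ord i; have := ltn_ord j.
  move: (nat_of_ord i) (nat_of_ord j) => x y Hy Hx.
  rewrite /wf /=. crush; field; by [].
have Hs : Num.sqrt (2:R) * Num.sqrt 2 = 2 by rewrite -expr2 sqr_sqrtr // ler0n.
have Hs0 : Num.sqrt (2:R) != 0 by rewrite gt_eqF // sqrtr_gt0 ltr0n.
rewrite /congruent; exists ((Num.sqrt (2:R)) *: D0); split.
  by rewrite unitmxZ ?unitfE //; case: (mulmx1_unit HU).
have -> : (Num.sqrt 2 *: D0)^T = Num.sqrt 2 *: D0^T by apply/matrixP => i j; rewrite !mxE.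
rewrite -scalemxAl -scalemxAl -scalemxAr scalerA Hs E.
apply/matrixP => i j; rewrite !mxE mulrA mulfV ?mul1r //.
by rewrite pnatr_eq0.
Qed.

Lemma base2 : congruent (mxf 2 (wf 2)) (mxf 2 (dsf 2 gf hsf)).
Proof.
pose a := fun i : nat => (1 - 2 * (i == 1)%:R : R).
eapply (@cong_sq _ _ _ a id (fun _ => 0) id (mxf 2 (sqf a id (fun _ => 0) id))).
  rewrite id_mxf; apply/matrixP => i j; rewrite mulQ mxE.
  have := ltn_ord i; have := ltn_ord j.
  move: (nat_of_ord i) (nat_of_ord j) => x y Hy Hx.
  rewrite /sqf /a /=. crush.
move=> i j Hi Hj; rewrite /a /wf /dsf /gf /=. crush.
Qed.

Lemma even_claim k :
  congruent (mxf (k.*2.+2) (wf (k.*2.+2))) (mxf (k.*2.+2) (dsf 2 gf hsf)).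
Proof.
elim: k => [|k IH]; first exact: base2.
rewrite doubleS; apply: cong_trans (@peel (k.*2.+2) isT) _.
have E1 : mxf (k.*2.+4) (dsf 2 hf (wf (k.*2.+2))) = dsum (H2m1 R) (mxf _ (wf (k.*2.+2))).
  by rewrite H2E dsumE.
rewrite E1; eapply cong_trans; first exact (@cong_lift _ _ (H2m1 R) _ _ IH).
rewrite H2E dsumE; exact (swap2 _).
Qed.

Lemma odd_claim k :
  congruent (mxf (k.*2.+1) (wf (k.*2.+1))) (mxf (k.*2.+1) (dsf 1 (fun _ _ => 1) hsf)).
Proof.
elim: k => [|k IH].
  by apply: cong_eq; apply/matrixP => i j; rewrite !mxE !ord1 /wf /dsf /= subr0 add0r.
rewrite doubleS; apply: cong_trans (@peel (k.*2.+1) isT) _.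
have E1 : mxf (k.*2.+3) (dsf 2 hf (wf (k.*2.+1))) = dsum (H2m1 R) (mxf _ (wf (k.*2.+1))).
  by rewrite H2E dsumE.
rewrite E1; eapply cong_trans; first exact (@cong_lift _ _ (H2m1 R) _ _ IH).
rewrite H2E dsumE; exact (swap1 _).
Qed.

End Aux.

Theorem lemma7p6 (R : realType) :
  (forall k : nat, congruent (Cm R k.*2.+2) (dsum (Gamma2 R) (Hsum R k))) /\
  (forall k : nat, congruent (Cm R k.*2.+1) (dsum (1%:M : 'M[R]_1) (Hsum R k))).
Proof.
split => k.
- apply: cong_trans (C_W _ _) _; apply: cong_trans (even_claim _ k) _.
  by apply: cong_eq; rewrite Gamma2E HsumE dsumE.
- apply: cong_trans (C_W _ _) _; apply: cong_trans (odd_claim _ k) _.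
  by apply: cong_eq; rewrite oneE HsumE dsumE.
Qed.
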